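(* Let $I$ be a compact interval in $\mathbb{R}$ (of positive length) and $f:I\to\mathcal{K}(\mathbb{R})$ continuous. Then the distance set $\Delta(\mathcal{G}_*(f))=\{|x-x_*|+\mathfrak{H}(f(x),f(x_* )):x,x_*\in I\}$ is an interval, and $\dim_H\Delta(\mathcal{G}_*(f))=\underline{\dim}_B\Delta(\mathcal{G}_*(f))=\overline{\dim}_B\Delta(\mathcal{G}_*(f))=1$.
   Context: $\mathcal{K}(\mathbb{R})$: non-empty compact subsets of $\mathbb{R}$ with the Hausdorff distance $\mathfrak{H}$. $\mathcal{G}_*(f)=\{(x,f(x)):x\in I\}$. $\dim_H$, $\underline{\dim}_B$, $\overline{\dim}_B$: Hausdorff, lower box and upper box dimensions. *)

(* Defs.v *)
From HB Require Import structures.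
From mathcomp Require Import all_boot all_order all_algebra.
From mathcomp Require Import all_classical all_reals all_analysis.
Set Implicit Arguments. Unset Strict Implicit. Unset Printing Implicit Defensive.
Import Order.TTheory GRing.Theory Num.Theory.
Import numFieldNormedType.Exports.
Local Open Scope classical_set_scope.
Local Open Scope ring_scope.

Section Defs.
Variable R : realType.

Definition nonempty_compact (A : set R) : Prop := A !=set0 /\ compact A.

Definition dist_pt (a : R) (B : set R) : R := inf [set `|a - b| | b in B].

Definition hausdorff_dist (A B : set R) : R :=
  Num.max (sup [set dist_pt a B | a in A]) (sup [set dist_pt b A | b in B]).

Definition hcontinuous_on (I : set R) (f : R -> set R) : Prop :=
  forall x, I x -> forall e : R, 0 < e -> exists2 d : R, 0 < d &
    forall y, I y -> `|x - y| < d -> hausdorff_dist (f x) (f y) < e.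

Definition graph_distance_set (I : set R) (f : R -> set R) : set R :=
  [set r | exists x y, I x /\ I y /\ r = `|x - y| + hausdorff_dist (f x) (f y)].

Definition ediam (U : set R) : \bar R :=
  ereal_sup [set (`|x - y|)%:E | x in U & y in U].

Definition hausdorff_content (s d : R) (E : set R) : \bar R :=
  ereal_inf [set (\sum_(i <oo) ((fine (ediam (U i))) `^ s)%:E)%E
            | U in [set U : nat -> set R |
                    E `<=` \bigcup_i U i /\ forall i, (ediam (U i) <= d%:E)%E]].

(* s-dimensional Hausdorff (outer) measure: lim_{d -> 0+} = sup_{d > 0} *)
Definition hausdorff_measure (s : R) (E : set R) : \bar R :=
  ereal_sup [set hausdorff_content s d E | d in [set d : R | 0 < d]].

Definition hausdorff_dim (E : set R) : \bar R :=
  ereal_inf [set s%:E | s in [set s : R | 0 <= s /\ hausdorff_measure s E = 0%E]].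

Definition cover_number (d : R) (E : set R) : \bar R :=
  ereal_inf [set (n%:R)%:E | n in [set n : nat | exists U : nat -> set R,
               E `<=` \bigcup_(i in [set i | (i < n)%N]) U i /\
               forall i, (i < n)%N -> (ediam (U i) <= d%:E)%E]].

Definition box_ratio (E : set R) (d : R) : \bar R :=
  (ln (fine (cover_number d E)) / (- ln d))%:E.

Definition lower_box_dim (E : set R) : \bar R :=
  ereal_sup [set ereal_inf [set box_ratio E d | d in [set d : R | 0 < d < e]]
            | e in [set e : R | 0 < e]].

Definition upper_box_dim (E : set R) : \bar R :=
  ereal_inf [set ereal_sup [set box_ratio E d | d in [set d : R | 0 < d < e]]
            | e in [set e : R | 0 < e]].

End Defs.

(* Main.v *)
Require Import Defs.
From HB Require Import structures.
From mathcomp Require Import all_boot all_order all_algebra.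
From mathcomp Require Import all_classical all_reals all_analysis.
Import Order.TTheory GRing.Theory Num.Theory.
Import numFieldNormedType.Exports.
Local Open Scope classical_set_scope.
Local Open Scope ring_scope.
From mathcomp Require Import ring lra.
Section HD.
Context {R : realType}.
Implicit Types A B C : set R.

Definition nb A := A !=set0 /\ exists M, forall x, A x -> `|x| <= M.

Lemma cpt_nb A : nonempty_compact A -> nb A.
Proof.
move=> [A0 /compact_bounded [M [_ HM]]]; split => //.
exists (`|M| + 1) => x Ax; apply: (HM (`|M| + 1)) => //.
by rewrite (le_lt_trans (ler_norm _)) ?ltrDl.
Qed.

Lemma dist_ge0 a B : B !=set0 -> 0 <= dist_pt a B.
Proof.
move=> [b Bb]; apply: lb_le_inf; first by exists `|a - b|, b.
by move=> _ [c _ <-].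
Qed.

Lemma dist_le a B b : B b -> dist_pt a B <= `|a - b|.
Proof.
move=> Bb; apply: ge_inf; last by exists b.
by exists 0 => _ [c _ <-].
Qed.

Arguments dist_le a {B b}.

Lemma dist_tri a a' B : B !=set0 -> dist_pt a B <= `|a - a'| + dist_pt a' B.
Proof.
move=> [b0 Bb0]; rewrite -lerBlDl; apply: lb_le_inf; first by exists `|a' - b0|, b0.
move=> _ [b Bb <-]; rewrite lerBlDl; apply: (le_trans (dist_le a Bb)).
exact: ler_distD.
Qed.

Arguments dist_tri a a' {B}.

Lemma dist_has_ub A B : nb A -> nb B -> has_ubound [set dist_pt a B | a in A].
Proof.
move=> [_ [MA HA]] [[b0 Bb0] _]; exists (MA + `|b0|) => _ [a Aa <-].
apply: (le_trans (dist_le a Bb0)); apply: (le_trans (ler_normB _ _)).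
by rewrite lerD2r HA.
Qed.

Lemma dist_le_H a A B : nb A -> nb B -> A a -> dist_pt a B <= hausdorff_dist A B.
Proof.
move=> nA nB Aa; rewrite /hausdorff_dist le_max; apply/orP; left.
by apply: ub_le_sup; [exact: dist_has_ub | exists a].
Qed.

Arguments dist_le_H a {A B}.

Lemma HC A B : hausdorff_dist A B = hausdorff_dist B A.
Proof. by rewrite /hausdorff_dist maxC. Qed.

Lemma dist_le_H' b A B : nb A -> nb B -> B b -> dist_pt b A <= hausdorff_dist A B.
Proof. by move=> nA nB Bb; rewrite HC; apply: dist_le_H. Qed.

Lemma H_le A B c : A !=set0 -> B !=set0 ->
  (forall a, A a -> dist_pt a B <= c) -> (forall b, B b -> dist_pt b A <= c) ->
  hausdorff_dist A B <= c.
Proof.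
move=> [a Aa] [b Bb] H1 H2; rewrite ge_max; apply/andP; split; apply: ge_sup.
- by exists (dist_pt a B), a.
- by move=> _ [x Ax <-]; apply: H1.
- by exists (dist_pt b A), b.
- by move=> _ [x Ax <-]; apply: H2.
Qed.

Lemma H_ge0 A B : nb A -> nb B -> 0 <= hausdorff_dist A B.
Proof.
move=> nA nB; have [[a Aa] _] := nA.
apply: (le_trans _ (dist_le_H a nA nB Aa)); apply: dist_ge0; exact: nB.1.
Qed.

Lemma H0 A : nb A -> hausdorff_dist A A = 0.
Proof.
move=> nA; apply/le_anti; rewrite H_ge0 // andbT.
by apply: H_le; try exact: nA.1; move=> x Ax; apply: (le_trans (dist_le x Ax)); rewrite subrr normr0.
Qed.

Lemma dist_via a A B : nb A -> nb B -> dist_pt a A <= dist_pt a B + hausdorff_dist B A.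
Proof.
move=> nA nB; have [[b0 Bb0] _] := nB.
rewrite -lerBlDr; apply: lb_le_inf; first by exists `|a - b0|, b0.
move=> _ [b Bb <-]; rewrite lerBlDr; apply: (le_trans (dist_tri a b nA.1)).
by rewrite lerD2l; apply: dist_le_H.
Qed.

Arguments dist_via a {A B}.

Lemma Htri A B C : nb A -> nb B -> nb C ->
  hausdorff_dist A C <= hausdorff_dist A B + hausdorff_dist B C.
Proof.
move=> nA nB nC; apply: H_le; [exact: nA.1|exact: nC.1| |].
- move=> a Aa; apply: (le_trans (dist_via a nC nB)).
  by rewrite lerD2r; apply: dist_le_H.
- move=> c Cc; apply: (le_trans (dist_via c nA nB)).
  rewrite addrC (HC B A) lerD2l; exact: (dist_le_H' c B C nB nC Cc).
Qed.

End HD.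
Arguments Htri {R A B C}.
Arguments H_ge0 {R A B}.
Arguments H0 {R A}.
Section Diam.
Context {R : realType}.
Implicit Types U : set R.

Lemma ediam_ub U x y : U x -> U y -> ((`|x - y|)%:E <= ediam U)%E.
Proof. by move=> Ux Uy; apply: ereal_sup_ubound; exists x => //; exists y. Qed.
Arguments ediam_ub {U x y}.

Lemma ediam_le U h : (forall x y, U x -> U y -> `|x - y| <= h) -> (ediam U <= h%:E)%E.
Proof. by move=> H; apply: ge_ereal_sup => _ [x Ux [y Uy <-]]; rewrite lee_fin H. Qed.

Lemma ediam0 : ediam (@set0 R) = -oo%E.
Proof.
rewrite /ediam; have -> : [set (`|x - y|)%:E | x in @set0 R & y in set0] = set0.
  by apply/seteqP; split => // _ [x []].
exact: ereal_sup0.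
Qed.

Lemma fine_ediam_ge0 U : 0 <= fine (ediam U).
Proof.
have [[x Ux]|U0] := pselect (U !=set0).
  have := ediam_ub Ux Ux; rewrite subrr normr0 => h.
  case: (ediam U) h => //= r; by rewrite lee_fin.
have -> : U = set0 by apply/seteqP; split => // y Uy; apply: U0; exists y.
by rewrite ediam0.
Qed.

Lemma fine_ediam_le U h : 0 <= h -> (ediam U <= h%:E)%E -> fine (ediam U) <= h.
Proof. by case: (ediam U) => //= r _; rewrite lee_fin. Qed.

Lemma ediam_fin {U d x y} : (ediam U <= d%:E)%E -> U x -> U y -> `|x - y| <= fine (ediam U).
Proof.
move=> hd Ux Uy; have := ediam_ub Ux Uy; move: hd.
by case: (ediam U) => //= r; rewrite !lee_fin.
Qed.

End Diam.

Section Meas.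
Context {R : realType}.
Local Open Scope ereal_scope.

Lemma cover_lb (m d : R) (U : nat -> set R) : (0 < m)%R ->
  `[0%R, m] `<=` \bigcup_i U i -> (forall i, ediam (U i) <= d%:E) ->
  m%:E <= \sum_(i <oo) (2 * fine (ediam (U i)))%:E.
Proof.
move=> m0 cov hd.
pose r i := fine (ediam (U i)); pose c i := xget 0%R (U i).
pose V i := [set` `[c i - r i, c i + r i]%R] : set R.
have UV i : U i `<=` V i.
  move=> x Ux; have Uc : U i (c i) by apply: xgetI Ux.
  have := ediam_fin (hd i) Ux Uc; rewrite /V /= in_itv /= => h.
  move: h; rewrite ler_norml => /andP[h1 h2]; apply/andP; split; rewrite /r; lra.
have mV : forall i, measurable (V i) by move=> i; exact: measurable_itv.
have : (lebesgue_measure ([set` `[0%R, m]] : set R) <= \sum_(i <oo) lebesgue_measure (V i)).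
  apply: (measure_sigma_subadditive lebesgue_measure) => //.
  by move=> x /cov [i _ /UV Vx]; exists i.
rewrite lebesgue_measure_itv /= lte_fin m0 oppr0 adde0 => h; apply: (le_trans h).
apply: lee_nneseries => // i _.
rewrite /V lebesgue_measure_itv /=.
have r0 : (0 <= r i)%R by exact: fine_ediam_ge0.
case: ifP => _; last by rewrite lee_fin mulr_ge0.
by rewrite -EFinD lee_fin /r; lra.
Qed.

End Meas.

Import archimedean.Num.Theory.
Local Notation truncn := Num.truncn.
Section Dim.
Context {R : realType}.

Lemma pow_ge_self (r s : R) : 0 <= r <= 1 -> 0 <= s <= 1 -> r <= r `^ s.
Proof.
move=> /andP[r0 r1] /andP[s0 s1].
have [->|rp] := eqVneq r 0; first exact: powR_ge0.
by apply: ger1_powR => //; rewrite r1 andbT lt_neqAle eq_sym rp.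
Qed.

Lemma grid (h M x : R) : 0 < h -> 0 <= x <= M ->
  exists2 k, (k < (truncn (M / h)).+1)%N & (k%:R * h <= x <= k%:R * h + h).
Proof.
move=> h0 /andP[x0 xM]; exists (truncn (x / h)).
  by rewrite ltnS; apply: le_truncn; rewrite ler_pM2r // invr_gt0.
have /andP[k1 k2] := truncn_itv (divr_ge0 x0 (ltW h0)).
move: k1 k2; rewrite ler_pdivlMr // ltr_pdivrMr // -addn1 natrD => k1 k2.
apply/andP; split => //; lra.
Qed.

Definition G (h : R) (k : nat) : set R := [set` `[k%:R * h, k%:R * h + h]].

Lemma ediam_G h k : 0 <= h -> (ediam (G h k) <= h%:E)%E.
Proof.
move=> h0; apply: ediam_le => x y; rewrite /G /= !in_itv /= => /andP[? ?] /andP[? ?].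
rewrite ler_norml; apply/andP; split; lra.
Qed.

Lemma sum_if (c : R) n : 0 <= c ->
  (\sum_(i <oo) (if (i < n)%N then c else 0)%:E = (c *+ n)%:E)%E.
Proof.
move=> c0; rewrite (nneseries_split 0 n); last by move=> k _; case: ifP.
rewrite add0n eseries0 ?adde0; last by move=> i ni _; rewrite ltnNge ni.
rewrite big_nat_cond (eq_bigr (fun=> c%:E)); last first.
  by move=> i /andP[/andP[_ ->]].
rewrite -big_nat_cond.
elim: n {c0} => [|n IH]; first by rewrite big_geq.
by rewrite big_nat_recr //= IH mulrS EFinD addeC.
Qed.


Lemma content_lb (E : set R) (m s d : R) : 0 < m -> `[0, m] `<=` E ->
  0 <= s <= 1 -> 0 < d <= 1 -> ((m / 2)%:E <= hausdorff_content s d E)%E.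
Proof.
move=> m0 mE s01 /andP[d0 d1]; apply: le_ereal_inf_tmp => _ [U [cov hd] <-].
have := cover_lb _ _ _ m0 (subset_trans mE cov) hd.
have r0 i : 0 <= fine (ediam (U i)) by exact: fine_ediam_ge0.
under eq_eseriesr do rewrite EFinM.
rewrite nneseriesZl; last by move=> i _; rewrite lee_fin.
have le1 : (\sum_(i <oo) (fine (ediam (U i)))%:E <=
            \sum_(i <oo) ((fine (ediam (U i))) `^ s)%:E)%E.
  apply: lee_nneseries => [i _ _|i _]; first by rewrite lee_fin.
  rewrite lee_fin; apply: pow_ge_self => //; rewrite r0 /=.
  apply: fine_ediam_le; first by [].
  exact: le_trans (hd i) _.
move=> h; apply: le_trans le1.
move: h; have : (0 <= \sum_(i <oo) (fine (ediam (U i)))%:E)%E.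
  by apply: nneseries_ge0 => i _ _; rewrite lee_fin.
case: (\sum_(i <oo) (fine (ediam (U i)))%:E)%E => // [x x0|].
  have -> : (2 * x%:E)%E = (2 * x)%:E by rewrite EFinM.
  by rewrite !lee_fin => h; lra.
by move=> _; rewrite leey.
Qed.

Lemma hmeasure_pos (E : set R) (m s : R) : 0 < m -> `[0, m] `<=` E ->
  0 <= s < 1 -> hausdorff_measure s E <> 0%E.
Proof.
move=> m0 mE /andP[s0 s1] H0.
have : (hausdorff_content s 1 E <= hausdorff_measure s E)%E.
  by apply: ereal_sup_ubound; exists 1 => //; exact: ltr01.
have h1 := @content_lb E m s 1 m0 mE.
rewrite H0 => h2; have := h1 _ _; rewrite s0 ltW //= lexx ltr01 => /(_ isT isT) {}h1.
have := le_trans h1 h2; rewrite lee_fin; lra.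
Qed.


Lemma content0 (E : set R) (M s d : R) : 0 <= M -> E `<=` `[0, M] ->
  1 < s -> 0 < d -> hausdorff_content s d E = 0%E.
Proof.
move=> M0 EM s1 d0; apply/le_anti/andP; split; last first.
  apply: le_ereal_inf_tmp => _ [U _ <-].
  by apply: nneseries_ge0 => i _ _; rewrite lee_fin powR_ge0.
apply/lee_addgt0Pr => e e0; rewrite add0e.
have M10 : 0 < M + 1 by lra.
pose t0 := (e / (M + 1)) `^ (1 / (s - 1)).
have t00 : 0 < t0 by apply: powR_gt0; rewrite divr_gt0.
pose h := Num.min (Num.min d 1) t0.
have h0 : 0 < h by rewrite /h !lt_min d0 ltr01 t00.
have h1 : h <= 1 by rewrite /h !ge_min lexx orbT.
have hd : h <= d by rewrite /h !ge_min lexx.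
have ht : h <= t0 by rewrite /h !ge_min lexx orbT.
pose n := (truncn (M / h)).+1.
pose U k := if (k < n)%N then G h k else set0.
apply: ge_ereal_inf; exists (\sum_(k <oo) ((fine (ediam (U k))) `^ s)%:E)%E.
  exists U => //; split.
    move=> x /EM; rewrite /= in_itv /= => xM.
    have [k kn hk] := grid _ _ _ h0 xM; exists k => //.
    by rewrite /U kn /G /= in_itv /=.
  move=> i; rewrite /U; case: ifP => _; last by rewrite ediam0 leNye.
  by apply: le_trans (ediam_G _ _ (ltW h0)) _; rewrite lee_fin.
have s0 : s != 0 by rewrite gt_eqF //; lra.
apply: (@le_trans _ _ (\sum_(i <oo) (if (i < n)%N then h `^ s else 0)%:E)%E).
  apply: lee_nneseries => [i _ _|i _]; first by rewrite lee_fin powR_ge0.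
  rewrite /U; case: ifP => _; last by rewrite ediam0 /= powR0.
  rewrite lee_fin; apply: ge0_ler_powR; first lra.
  - by rewrite nnegrE fine_ediam_ge0.
  - by rewrite nnegrE ltW.
  by apply: fine_ediam_le; [exact: ltW | exact: ediam_G _ _ (ltW h0)].
rewrite sum_if ?powR_ge0 // lee_fin.
have hs : h `^ s = h * h `^ (s - 1) by rewrite mulr_powRB1 // ?(ltW h0); lra.
have ts : t0 `^ (s - 1) = e / (M + 1).
  rewrite /t0 -powRrM mul1r mulVf; last by rewrite subr_eq0 gt_eqF.
  by rewrite powRr1 // divr_ge0 // ltW.
have hts : h `^ (s - 1) <= e / (M + 1).
  rewrite -ts; apply: ge0_ler_powR => //; first lra.
  - by rewrite nnegrE ltW.
  - by rewrite nnegrE ltW.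
have nh : n%:R * h <= M + 1.
  rewrite /n -addn1 natrD mulrDl mul1r.
  have := truncn_le (M / h); rewrite divr_ge0 // ?(ltW h0) // ler_pdivlMr // => tM.
  lra.
rewrite hs -mulr_natl mulrA.
apply: (le_trans (ler_wpM2r (powR_ge0 _ _) nh)).
rewrite mulrC; apply: (le_trans (ler_wpM2r (ltW M10) hts)).
by rewrite mulfVK // gt_eqF.
Qed.

Lemma hmeasure0 (E : set R) (M s : R) : 0 <= M -> E `<=` `[0, M] ->
  1 < s -> hausdorff_measure s E = 0%E.
Proof.
move=> M0 EM s1; apply/le_anti/andP; split.
  by apply: ge_ereal_sup => _ [d d0 <-]; rewrite (content0 _ _ _ _ M0 EM s1 d0).
apply: le_ereal_sup_tmp; exists (hausdorff_content s 1 E); first by exists 1 => //; exact: ltr01.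
by rewrite (content0 _ _ _ _ M0 EM s1 ltr01).
Qed.


Lemma cn_ub (E : set R) (M d : R) : 0 <= M -> E `<=` `[0, M] -> 0 < d ->
  (cover_number d E <= ((truncn (M / d)).+1)%:R%:E)%E.
Proof.
move=> M0 EM d0; apply: ge_ereal_inf; exists ((truncn (M / d)).+1)%:R%:E => //.
exists (truncn (M / d)).+1 => //; exists (G d); split.
  move=> x /EM; rewrite /= in_itv /= => xM.
  have [k kn hk] := grid _ _ _ d0 xM; exists k => //.
by move=> i _; exact: ediam_G _ _ (ltW d0).
Qed.

Lemma cn_lb (E : set R) (m d : R) : 0 < m -> `[0, m] `<=` E -> 0 < d ->
  ((m / (2 * d))%:E <= cover_number d E)%E.
Proof.
move=> m0 mE d0; apply: le_ereal_inf_tmp => _ [n [U [cov hd]] <-].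
pose W i := if (i < n)%N then U i else set0.
have hW i : (ediam (W i) <= d%:E)%E.
  by rewrite /W; case: ifP => [/hd //|_]; rewrite ediam0 leNye.
have cW : `[0, m] `<=` \bigcup_i W i.
  move=> x /mE /cov [i /= ilt Ux]; exists i => //; by rewrite /W ilt.
have := cover_lb _ _ _ m0 cW hW.
move=> h; have : (m%:E <= ((2 * d) *+ n)%:E)%E.
  apply: (le_trans h); rewrite -sum_if; last by rewrite mulr_ge0 // ltW.
  apply: lee_nneseries => [i _ _|i _]; first by rewrite lee_fin mulr_ge0 // fine_ediam_ge0.
  rewrite /W; case: ifP => iN; last by rewrite ediam0 /= mulr0.
  rewrite lee_fin ler_pM2l //; apply: fine_ediam_le; [exact: (ltW d0) | exact: hd].
rewrite !lee_fin ler_pdivrMr ?mulr_gt0 // => hm.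
by rewrite -mulr_natl in hm.
Qed.


Lemma cn_fin (E : set R) (m M d : R) : 0 < m -> 0 <= M -> `[0, m] `<=` E ->
  E `<=` `[0, M] -> 0 < d <= 1 ->
  exists c, cover_number d E = c%:E /\ m / (2 * d) <= c <= (M + 1) / d.
Proof.
move=> m0 M0 mE EM /andP[d0 d1].
have := cn_lb _ _ _ m0 mE d0; have := cn_ub _ _ _ M0 EM d0.
case: (cover_number d E) => [c| |]; [| by rewrite leye_eq | by move=> _; rewrite leeNy_eq].
rewrite !lee_fin => h1 h2; exists c; split => //; rewrite h2 /=.
apply: (le_trans h1).
have := truncn_le (M / d); rewrite divr_ge0 // ?(ltW d0) // => tM.
rewrite -addn1 natrD mulrDl div1r.
have : 1 <= d^-1 by rewrite invf_ge1.
lra.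
Qed.

Lemma ratio_bound (E : set R) (m M d : R) : 0 < m -> 0 <= M -> `[0, m] `<=` E ->
  E `<=` `[0, M] -> 0 < d < 1 ->
  `|ln (fine (cover_number d E)) / (- ln d) - 1| <=
    (`|ln (m / 2)| + `|ln (M + 1)|) / (- ln d).
Proof.
move=> m0 M0 mE EM /andP[d0 d1].
have [c [-> /andP[c1 c2]]] := cn_fin _ _ _ d m0 M0 mE EM (introT andP (conj d0 (ltW d1))).
have L0 : 0 < - ln d by rewrite oppr_gt0 ln_lt0 // d0.
have cpos : 0 < c by apply: lt_le_trans c1; rewrite divr_gt0 // mulr_gt0.
have lo : ln (m / 2) - ln d <= ln c.
  rewrite -ln_div ?posrE ?divr_gt0 //.
  have -> : m / 2 / d = m / (2 * d) by rewrite invfM mulrA.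
  by rewrite ler_ln ?posrE ?divr_gt0 // mulr_gt0.
have hi : ln c <= ln (M + 1) - ln d.
  rewrite -ln_div ?posrE ?divr_gt0 //; last by lra.
  by rewrite ler_ln ?posrE ?divr_gt0 //; lra.
set L := - ln d in L0 *.
have -> : ln c / L - 1 = (ln c - L) / L by field; rewrite gt_eqF.
rewrite normrM (gtr0_norm (_ : 0 < L^-1)); last by rewrite invr_gt0.
rewrite ler_pM2r ?invr_gt0 //.
rewrite ler_norml; apply/andP; split.
- have := normr_ge0 (ln (M + 1)).
  have := ler_norm (- ln (m / 2)); rewrite normrN.
  rewrite /L in hi lo *; lra.
- have := ler_norm (ln (M + 1)); have := normr_ge0 (ln (m / 2)).
  rewrite /L in hi lo *; lra.
Qed.


Lemma eps_of_log (g : R -> R) (K : R) : 0 <= K ->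
  (forall d, 0 < d < 1 -> `|g d - 1| <= K / (- ln d)) ->
  forall e, 0 < e -> exists2 e0, 0 < e0 & forall d, 0 < d < e0 -> `|g d - 1| <= e.
Proof.
move=> K0 hg e e0.
have K1e : 0 < (K + 1) / e by rewrite divr_gt0 //; lra.
exists (Num.min (1 / 2) (expR (- ((K + 1) / e)))).
  by rewrite lt_min divr_gt0 // expR_gt0.
move=> d /andP[d0]; rewrite lt_min => /andP[dh de].
have d1 : d < 1 by apply: lt_trans dh _; lra.
apply: le_trans (hg d _) _; first by rewrite d0 d1.
have lnd : ln d < - ((K + 1) / e).
  by rewrite -[X in _ < X]expRK ltr_ln ?posrE ?expR_gt0.
have L0 : (K + 1) / e < - ln d by lra.
have Lp : 0 < - ln d by apply: lt_trans L0.
rewrite ler_pdivrMr //.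
move: L0; rewrite ltr_pdivrMr // => h; lra.
Qed.

Lemma liminf_limsup (g : R -> R) :
  (forall e, 0 < e -> exists2 e0, 0 < e0 & forall d, 0 < d < e0 -> `|g d - 1| <= e) ->
  ereal_sup [set ereal_inf [set (g d)%:E | d in [set d | 0 < d < e]] | e in [set e | 0 < e]] = 1%:E /\
  ereal_inf [set ereal_sup [set (g d)%:E | d in [set d | 0 < d < e]] | e in [set e | 0 < e]] = 1%:E.
Proof.
move=> hg; split; apply/le_anti/andP; split.
- apply: ge_ereal_sup => _ [e e0 <-]; apply/lee_addgt0Pr => eps eps0.
  have [e1 e10 h1] := hg eps eps0.
  pose d := Num.min e e1 / 2.
  have dm : 0 < Num.min e e1 by rewrite lt_min e0 e10.
  have dd : 0 < d < Num.min e e1 by apply/andP; split; [rewrite divr_gt0 | rewrite ltr_pdivrMr //; lra].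
  have [de d1] : d < e /\ d < e1.
    by move: dd => /andP[_]; rewrite lt_min => /andP[].
  have d0 : 0 < d by case/andP: dd.
  apply: ge_ereal_inf; exists (g d)%:E; first by exists d => //; apply/andP.
  have := h1 d; rewrite d0 d1 => /(_ isT); rewrite ler_norml => /andP[_ ?].
  by rewrite -EFinD lee_fin; lra.
- apply/lee_subgt0Pr => eps eps0.
  have [e1 e10 h1] := hg eps eps0.
  apply: le_ereal_sup_tmp; exists (ereal_inf [set (g d)%:E | d in [set d | 0 < d < e1]]).
    by exists e1.
  apply: le_ereal_inf_tmp => _ [d dI <-].
  have := h1 d dI; rewrite ler_norml => /andP[? _].
  by rewrite -EFinB lee_fin; lra.
- apply/lee_addgt0Pr => eps eps0.
  have [e1 e10 h1] := hg eps eps0.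
  apply: ge_ereal_inf; exists (ereal_sup [set (g d)%:E | d in [set d | 0 < d < e1]]).
    by exists e1.
  apply: ge_ereal_sup => _ [d dI <-].
  have := h1 d dI; rewrite ler_norml => /andP[_ ?].
  by rewrite -EFinD lee_fin; lra.
- apply: le_ereal_inf_tmp => _ [e e0 <-]; apply/lee_subgt0Pr => eps eps0.
  have [e1 e10 h1] := hg eps eps0.
  pose d := Num.min e e1 / 2.
  have dm : 0 < Num.min e e1 by rewrite lt_min e0 e10.
  have dd : 0 < d < Num.min e e1 by apply/andP; split; [rewrite divr_gt0 | rewrite ltr_pdivrMr //; lra].
  have [de d1] : d < e /\ d < e1.
    by move: dd => /andP[_]; rewrite lt_min => /andP[].
  have d0 : 0 < d by case/andP: dd.
  apply: le_ereal_sup_tmp; exists (g d)%:E; first by exists d => //; apply/andP.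
  have := h1 d; rewrite d0 d1 => /(_ isT); rewrite ler_norml => /andP[? _].
  by rewrite -EFinB lee_fin; lra.
Qed.


Lemma hdim1 (E : set R) (m M : R) : 0 < m -> 0 <= M -> `[0, m] `<=` E ->
  E `<=` `[0, M] -> hausdorff_dim E = 1%:E.
Proof.
move=> m0 M0 mE EM; apply/le_anti/andP; split.
  apply/lee_addgt0Pr => eps eps0; apply: ge_ereal_inf.
  exists (1 + eps)%:E => //; exists (1 + eps) => //; split; first lra.
  by apply: (hmeasure0 _ _ _ M0 EM); lra.
apply: le_ereal_inf_tmp => _ [s [s0 Hs] <-]; rewrite lee_fin.
case: (ltP s 1) => // s1; exfalso; apply: (hmeasure_pos _ _ _ m0 mE _ Hs).
by rewrite s0 s1.
Qed.

Lemma boxdim1 (E : set R) (m M : R) : 0 < m -> 0 <= M -> `[0, m] `<=` E ->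
  E `<=` `[0, M] -> lower_box_dim E = 1%:E /\ upper_box_dim E = 1%:E.
Proof.
move=> m0 M0 mE EM.
have K0 : 0 <= `|ln (m / 2)| + `|ln (M + 1)| by rewrite addr_ge0.
have := @eps_of_log (fun d => ln (fine (cover_number d E)) / (- ln d)) _ K0.
move=> /(_ (fun d hd => ratio_bound _ _ _ _ m0 M0 mE EM hd)) /liminf_limsup.
by rewrite /lower_box_dim /upper_box_dim /box_ratio.
Qed.

End Dim.
Lemma epsdelta_within (R : realType) (A : set R) (g : R -> R) :
 (forall x, A x -> forall e, 0 < e -> exists2 d, 0 < d &
    forall y, A y -> `|x - y| < d -> `|g x - g y| < e) -> {within A, continuous g}.
Proof.
move=> H; apply/subspace_continuousP => x Ax; apply/cvgrPdist_lt => e e0.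
have [d d0 Hd] := H x Ax e e0.
rewrite near_withinE; apply/nbhs_ballP; exists d => //= y; rewrite /ball /= => xy Ay.
exact: Hd.
Qed.

Section Main.
Variables (R : realType) (a b : R) (f : R -> set R).
Hypotheses (ab : a < b) (hK : forall x, x \in `[a, b] -> nonempty_compact (f x))
  (hc : hcontinuous_on [set` `[a, b]] f).

Let H x y := hausdorff_dist (f x) (f y).
Let g x y := `|x - y| + H x y.

Lemma nbf x : x \in `[a, b] -> nb (f x).
Proof. by move=> /hK /cpt_nb. Qed.

Lemma Hlip x y x' y' : x \in `[a, b] -> y \in `[a, b] -> x' \in `[a, b] -> y' \in `[a, b] ->
  `|H x y - H x' y'| <= H x x' + H y y'.
Proof.
move=> /nbf nx /nbf ny /nbf nx' /nbf ny'.
have t1 := Htri nx nx' ny; have t2 := Htri nx' ny' ny.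
have t3 := Htri nx' nx ny'; have t4 := Htri nx ny ny'.
rewrite /H !(HC (f x') (f x)) !(HC (f y) (f y')) in t1 t2 t3 t4 *.
rewrite ler_norml; apply/andP; split; lra.
Qed.

Lemma glip x y x' y' : x \in `[a, b] -> y \in `[a, b] -> x' \in `[a, b] -> y' \in `[a, b] ->
  `|g x y - g x' y'| <= `|x - x'| + `|y - y'| + H x x' + H y y'.
Proof.
move=> Ix Iy Ix' Iy'; have h0 := @Hlip x y x' y' Ix Iy Ix' Iy'.
have h1 := ler_dist_dist (x - y) (x' - y').
have h2 : `|(x - y) - (x' - y')| <= `|x - x'| + `|y - y'|.
  have -> : (x - y) - (x' - y') = (x - x') - (y - y') by ring.
  exact: ler_normB.
move: h0 h1; rewrite /g !ler_norml => /andP[h0 h0'] /andP[h1 h1'].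
apply/andP; split; lra.
Qed.

Lemma H_cont x : x \in `[a, b] -> forall e, 0 < e -> exists2 d, 0 < d &
   forall y, y \in `[a, b] -> `|x - y| < d -> H x y < e.
Proof. by move=> Ix e e0; have [d d0 Hd] := hc x Ix e e0; exists d. Qed.


Let D := graph_distance_set [set` `[a, b]] f.

Lemma D_itv : is_interval D.
Proof.
move=> _ _ [x1 [y1 [I1 [J1 ->]]]] [x2 [y2 [I2 [J2 ->]]]] z /andP[z1 z2].
pose X t := x1 + t * (x2 - x1); pose Y t := y1 + t * (y2 - y1).
have XI t : t \in `[0, 1] -> X t \in `[a, b].
  move: I1 I2; rewrite /X !in_itv /= => /andP[p1 p2] /andP[p3 p4] /andP[p5 p6].
  have q1 : 0 <= (1 - t) * (x1 - a) by apply: mulr_ge0; rewrite subr_ge0.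
  have q2 : 0 <= t * (x2 - a) by apply: mulr_ge0; rewrite ?subr_ge0.
  have q3 : 0 <= (1 - t) * (b - x1) by apply: mulr_ge0; rewrite subr_ge0.
  have q4 : 0 <= t * (b - x2) by apply: mulr_ge0; rewrite ?subr_ge0.
  apply/andP; split; nra.
have YI t : t \in `[0, 1] -> Y t \in `[a, b].
  move: J1 J2; rewrite /Y !in_itv /= => /andP[p1 p2] /andP[p3 p4] /andP[p5 p6].
  have q1 : 0 <= (1 - t) * (y1 - a) by apply: mulr_ge0; rewrite subr_ge0.
  have q2 : 0 <= t * (y2 - a) by apply: mulr_ge0; rewrite ?subr_ge0.
  have q3 : 0 <= (1 - t) * (b - y1) by apply: mulr_ge0; rewrite subr_ge0.
  have q4 : 0 <= t * (b - y2) by apply: mulr_ge0; rewrite ?subr_ge0.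
  apply/andP; split; nra.
have cont : {within `[0, 1], continuous (fun t => g (X t) (Y t))}.
  apply: epsdelta_within => t It e e0.
  have e40 : 0 < e / 4 by rewrite divr_gt0.
  have [d1 d10 Hd1] := H_cont _ (XI t It) _ e40.
  have [d2 d20 Hd2] := H_cont _ (YI t It) _ e40.
  pose L := `|x2 - x1| + `|y2 - y1| + 1.
  have L0 : 0 < L by rewrite /L; have := normr_ge0 (x2 - x1); have := normr_ge0 (y2 - y1); lra.
  pose m0 := Num.min (Num.min d1 d2) (e / 4).
  have m00 : 0 < m0 by rewrite /m0 !lt_min d10 d20 e40.
  have m1 : m0 <= d1 by rewrite /m0 !ge_min lexx.
  have m2 : m0 <= d2 by rewrite /m0 !ge_min lexx orbT.
  have m3 : m0 <= e / 4 by rewrite /m0 !ge_min lexx orbT.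
  exists (m0 / L); first by rewrite divr_gt0.
  move=> t' It' tt'.
  have uL : `|t - t'| * L < m0 by rewrite -ltr_pdivlMr.
  have hX : `|X t - X t'| < m0.
    have -> : X t - X t' = (t - t') * (x2 - x1) by rewrite /X; ring.
    rewrite normrM; apply: le_lt_trans uL; apply: ler_wpM2l => //.
    by rewrite /L; have := normr_ge0 (y2 - y1); lra.
  have hY : `|Y t - Y t'| < m0.
    have -> : Y t - Y t' = (t - t') * (y2 - y1) by rewrite /Y; ring.
    rewrite normrM; apply: le_lt_trans uL; apply: ler_wpM2l => //.
    by rewrite /L; have := normr_ge0 (x2 - x1); lra.
  have h1 : H (X t) (X t') < e / 4 by apply: Hd1; [exact: XI | exact: (lt_le_trans hX m1)].
  have h2 : H (Y t) (Y t') < e / 4 by apply: Hd2; [exact: YI | exact: (lt_le_trans hY m2)].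
  have := glip _ _ _ _ (XI t It) (YI t It) (XI t' It') (YI t' It').
  move=> h; apply: le_lt_trans h _; lra.
have ler01 : (0 : R) <= 1 by [].
have [|c c01 hc'] := @IVT R _ 0 1 z ler01 cont.
  have -> : X 0 = x1 by rewrite /X mul0r addr0.
  have -> : Y 0 = y1 by rewrite /Y mul0r addr0.
  have -> : X 1 = x2 by rewrite /X mul1r addrC subrK.
  have -> : Y 1 = y2 by rewrite /Y mul1r addrC subrK.
  by rewrite ge_min z1 le_max z2 orbT.
by exists (X c), (Y c); split; [exact: XI | split; [exact: YI | rewrite -hc']].
Qed.

Lemma D0 : D 0.
Proof.
have Ia : a \in `[a, b] by rewrite in_itv /= lexx ltW.
by exists a, a; split => //; split => //; rewrite /= subrr normr0 add0r H0 //; exact: nbf.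
Qed.

Lemma Dab : D (b - a + H a b).
Proof.
have Ia : a \in `[a, b] by rewrite in_itv /= lexx ltW.
have Ib : b \in `[a, b] by rewrite in_itv /= lexx ltW.
exists a, b; split => //; split => //.
by rewrite distrC ger0_norm // subr_ge0 ltW.
Qed.

Lemma D_bnd : exists M, forall r, D r -> 0 <= r <= M.
Proof.
have Ia : a \in `[a, b] by rewrite in_itv /= lexx ltW.
have cphi : {within `[a, b], continuous (fun x => H a x)}.
  apply: epsdelta_within => x Ix e e0.
  have [d d0 Hd] := H_cont _ Ix _ e0; exists d => // y Iy xy.
  have := Hlip _ _ _ _ Ia Ix Ia Iy; rewrite /H H0; last exact: nbf.
  rewrite add0r => h.
  exact: le_lt_trans h (Hd _ Iy xy).
have [c Ic hcmax] := EVT_max (ltW ab) cphi.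
exists (b - a + 2 * H a c) => _ [x [y [Ix [Iy ->]]]].
have Ix' : x \in `[a, b] by [].
have Iy' : y \in `[a, b] by [].
have h1 := hcmax _ Ix'; have h2 := hcmax _ Iy'.
have t := Htri (nbf _ Ix') (nbf _ Ia) (nbf _ Iy').
have g1 := H_ge0 (nbf _ Ix') (nbf _ Iy').
rewrite (HC (f x) (f a)) in t.
have nxy : `|x - y| <= b - a.
  move: Ix' Iy'; rewrite !in_itv /= ler_norml => /andP[? ?] /andP[? ?].
  apply/andP; split; lra.
apply/andP; split; first by rewrite addr_ge0.
rewrite /H in h1 h2 *; lra.
Qed.


Lemma main_sec : is_interval D /\ hausdorff_dim D = 1%:E /\
  lower_box_dim D = 1%:E /\ upper_box_dim D = 1%:E.
Proof.
have [M HM] := D_bnd.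
have Ia : a \in `[a, b] by rewrite in_itv /= lexx ltW.
have Ib : b \in `[a, b] by rewrite in_itv /= lexx ltW.
have m0 : 0 < b - a + H a b.
  have := H_ge0 (nbf _ Ia) (nbf _ Ib); rewrite /H; have : 0 < b - a by rewrite subr_gt0. lra.
have M0 : 0 <= M by have /andP[] := HM _ D0; lra.
have mE : `[0, b - a + H a b] `<=` D.
  by move=> x; rewrite /= in_itv /= => hx; exact: (D_itv _ _ D0 Dab _ hx).
have EM : D `<=` `[0, M] by move=> x /HM; rewrite /= in_itv.
split; first exact: D_itv.
split; first exact: hdim1 m0 M0 mE EM.
exact: boxdim1 m0 M0 mE EM.
Qed.

End Main.

Theorem proposition4p5 (R : realType) (a b : R) (f : R -> set R) :
  a < b ->
  (forall x, x \in `[a, b] -> nonempty_compact (f x)) ->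
  hcontinuous_on [set` `[a, b]] f ->
  let D := graph_distance_set [set` `[a, b]] f in
  is_interval D /\
  hausdorff_dim D = 1%:E /\ lower_box_dim D = 1%:E /\ upper_box_dim D = 1%:E.
Proof.
move=> ab hK hc D; exact: (main_sec _ _ _ _ ab hK hc).
Qed.
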